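(* Let $G$ be a finite abelian group and let $f$ be an automorphism of $\mathcal{P}_{0}(G)$ with pullback $g$. Then $g$ is an automorphism of $G$.
   Context: For an additively written finite abelian group $G$, $\mathcal{P}_{0}(G)$ is the monoid of all subsets of $G$ containing $0$, with setwise addition and identity $\{0\}$. Every automorphism $f$ of $\mathcal{P}_0(G)$ maps $2$-element sets to $2$-element sets; the pullback of $f$ is the bijection $g:G\to G$ defined by $g(0)=0$ and, for nonzero $a\in G$, by $f(\{0,a\})=\{0,g(a)\}$. *)

(* Defs.v *)
From HB Require Import structures.
From mathcomp Require Import all_boot all_order all_algebra.
Set Implicit Arguments. Unset Strict Implicit. Unset Printing Implicit Defensive.
Import GRing.Theory.
Local Open Scope ring_scope.

Definition setadd (G : finZmodType) (A B : {set G}) : {set G} :=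
  [set a + b | a in A, b in B].

Definition P0 (G : finZmodType) := {A : {set G} | 0 \in A}.

Lemma setadd_P0 (G : finZmodType) (A B : {set G}) :
  0 \in A -> 0 \in B -> 0 \in setadd A B.
Proof.
move=> hA hB; apply/imset2P; exists 0 0 => //; by rewrite addr0.
Qed.

Definition P0add (G : finZmodType) (A B : P0 G) : P0 G :=
  exist _ (setadd (proj1_sig A) (proj1_sig B))
        (setadd_P0 (proj2_sig A) (proj2_sig B)).

Definition P0unit (G : finZmodType) : P0 G :=
  exist _ [set (0 : G)] (set11 (0 : G)).

Lemma zero_in_pair (G : finZmodType) (a : G) : (0 : G) \in [set 0; a].
Proof. by rewrite !inE eqxx. Qed.

Definition P0pair (G : finZmodType) (a : G) : P0 G :=
  exist _ [set 0; a] (zero_in_pair a).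

Definition P0_automorphism (G : finZmodType) (f : P0 G -> P0 G) : Prop :=
  bijective f /\
  (forall A B : P0 G, f (P0add A B) = P0add (f A) (f B)) /\
  f (P0unit G) = P0unit G.

Definition pullback (G : finZmodType) (f : P0 G -> P0 G) (g : G -> G) : Prop :=
  g 0 = 0 /\
  forall a : G, a != 0 -> proj1_sig (f (P0pair a)) = [set 0; g a].

Definition group_automorphism (G : finZmodType) (g : G -> G) : Prop :=
  bijective g /\ {morph g : x y / x + y}.

(* Main.v *)
Require Import Defs.
From mathcomp Require Import all_boot all_order all_algebra.
Set Implicit Arguments. Unset Strict Implicit. Unset Printing Implicit Defensive.
Import GRing.Theory.
Local Open Scope ring_scope.

Section Main.
Variable G : finZmodType.

Lemma P0_eq (A B : P0 G) : sval A = sval B -> A = B.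
Proof. case: A B => [A hA] [B hB] /= e; subst B; congr exist; exact: bool_irrelevance. Qed.

Lemma addpairE (A : {set G}) t z :
  (z \in setadd A [set 0; t]) = (z \in A) || (z - t \in A).
Proof.
apply/imset2P/orP.
- case=> x y xA; rewrite !inE => /orP[/eqP->|/eqP->] ->.
    by left; rewrite addr0.
  by right; rewrite addrK.
- case=> h.
    by exists z 0 => //; rewrite ?inE ?eqxx ?addr0.
  by exists (z - t) t => //; rewrite ?inE ?eqxx ?orbT ?subrK.
Qed.

Lemma pairsE (p q z : G) :
  (z \in setadd [set 0; p] [set 0; q]) = [|| z == 0, z == p, z == q | z == p + q].
Proof.
rewrite addpairE !inE subr_eq0 subr_eq.
by case: (z == 0); case: (z == p); case: (z == q).
Qed.

Definition Gfull : P0 G := exist (fun A : {set G} => 0 \in A) setT (in_setT 0).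

Lemma addG (X : P0 G) : P0add Gfull X = Gfull.
Proof.
apply: P0_eq => /=; apply/setP => z; rewrite inE; apply/imset2P.
exists z 0; rewrite ?in_setT ?addr0 //; exact: (svalP X).
Qed.

Lemma P0addC (A B : P0 G) : P0add A B = P0add B A.
Proof.
apply: P0_eq => /=; apply/setP => z; apply/imset2P/imset2P => -[x y hx hy ->];
 exists y x => //; exact: addrC.
Qed.

Definition closed (A : P0 G) t := forall z, z \in sval A -> z + t \in sval A.

Lemma closed_eq A t : closed A t -> P0add A (P0pair t) = A.
Proof.
move=> h; apply: P0_eq => /=; apply/setP => z; rewrite addpairE.
case hz: (z \in sval A) => //=.
by apply/negbTE/negP => /h; rewrite subrK hz.
Qed.

Lemma eq_closed A t : P0add A (P0pair t) = A -> closed A t.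
Proof.
move=> e z hz; rewrite -e /= addpairE; apply/orP; right; by rewrite addrK.
Qed.

Definition Mset (y : G) : {set G} := [set z | (z == 0) || (z != y)].
Lemma Mset0 y : (0 : G) \in Mset y. Proof. by rewrite inE eqxx. Qed.
Definition M y : P0 G := exist (fun A : {set G} => 0 \in A) (Mset y) (Mset0 y).


Variables (f : P0 G -> P0 G) (g : G -> G).
Hypotheses (fbij : bijective f)
  (fadd : forall A B : P0 G, f (P0add A B) = P0add (f A) (f B))
  (funit : f (P0unit G) = P0unit G) (g0 : g 0 = 0)
  (gpair : forall a : G, a != 0 -> proj1_sig (f (P0pair a)) = [set 0; g a]).

Lemma finj : injective f. Proof. exact: bij_inj. Qed.
Lemma fsurj Y : exists X, f X = Y.
Proof. case: fbij => h _ K; by exists (h Y). Qed.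

Lemma pair0 : P0pair (0 : G) = P0unit G.
Proof. by apply: P0_eq => /=; rewrite setUid. Qed.

Lemma L0 a : f (P0pair a) = P0pair (g a).
Proof.
have [->|a0] := eqVneq a 0; first by rewrite g0 pair0 funit.
by apply: P0_eq; rewrite gpair.
Qed.

Lemma fG : f Gfull = Gfull.
Proof.
have [X eX] := fsurj Gfull.
have e : P0add Gfull X = Gfull by exact: addG.
by rewrite -{1}e fadd eX P0addC addG.
Qed.

Lemma ginj : injective g.
Proof.
move=> a b e.
have : P0pair a = P0pair b by apply: finj; rewrite !L0 e.
move=> /(congr1 sval) /= /setP eab.
have := eab a; have := eab b; rewrite !inE !eqxx !orbT /=.
move=> /orP[/eqP b0|/eqP //] /esym/orP[/eqP a0|/eqP //].
by rewrite a0 b0.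
Qed.

Lemma gbij : bijective g. Proof. exact: injF_bij ginj. Qed.
Lemma gsurj t : exists x, g x = t.
Proof. case: gbij => h _ K; by exists (h t). Qed.
Lemma gnz x : x != 0 -> g x != 0.
Proof. move=> h; apply/eqP; rewrite -g0 => /ginj /eqP; exact/negP. Qed.

Lemma fnG : forall X, X <> Gfull -> f X <> Gfull.
Proof. by move=> X hX e; apply: hX; apply: finj; rewrite e fG. Qed.

Lemma dbl_pair (y : G) : y + y = 0 -> P0add (P0pair y) (P0pair y) = P0pair y.
Proof.
move=> h; apply: P0_eq => /=; apply/setP => z.
rewrite pairsE !inE h; by case: (z == 0); case: (z == y).
Qed.

Lemma L2g y : y + y = 0 -> g y + g y = 0.
Proof.
move=> /dbl_pair /(congr1 f); rewrite fadd !L0 => /(congr1 sval) /= /setP /(_ (g y + g y)) E.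
have : g y + g y \in [set 0; g y] by rewrite -E pairsE eqxx !orbT.
rewrite !inE => /orP[/eqP //|/eqP e].
have gy0 : g y = 0 by apply: (addrI (g y)); rewrite addr0.
by rewrite gy0 addr0.
Qed.

Lemma L2g' y : g y + g y = 0 -> y + y = 0.
Proof.
move=> /dbl_pair; rewrite -!L0 -fadd => /finj /(congr1 sval) /= /setP /(_ (y + y)) E.
have : y + y \in [set 0; y] by rewrite -E pairsE eqxx !orbT.
rewrite !inE => /orP[/eqP //|/eqP e].
have y0 : y = 0 by apply: (addrI y); rewrite addr0.
by rewrite y0 addr0.
Qed.

Lemma gmem_pairs y z w : w \in sval (P0add (P0pair y) (P0pair z)) ->
  g w \in sval (f (P0add (P0pair y) (P0pair z))).
Abort.

Lemma LPeq y z : y + y = 0 -> y != 0 -> z != 0 -> y + z != 0 ->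
  g (y + z) = g y + g z.
Proof.
move=> h y0 z0 yz0.
have E : P0add (P0pair y) (P0pair z) = P0add (P0pair y) (P0pair (y + z)).
  apply: P0_eq => /=; apply/setP => x; rewrite !pairsE addrA h add0r.
  by case: (x == 0); case: (x == y); case: (x == z); case: (x == y + z).
move: E => /(congr1 f); rewrite !fadd !L0 => /(congr1 sval) /= /setP /(_ (g (y + z))) E.
have : g (y + z) \in setadd [set 0; g y] [set 0; g z] by rewrite E pairsE eqxx !orbT.
rewrite pairsE => /or4P [/eqP e|/eqP e|/eqP e|/eqP //].
- by move: (gnz yz0); rewrite e eqxx.
- move/ginj: e => e; have : y + z = y + 0 by rewrite addr0.
  by move/addrI => e'; move: z0; rewrite e' eqxx.
- move/ginj: e => e; have : y + z = 0 + z by rewrite add0r.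
  by move/addIr => e'; move: y0; rewrite e' eqxx.
Qed.

Lemma opp_of_dbl (x : G) : x + x = 0 -> - x = x.
Proof. by move=> h; apply/esym/eqP; rewrite -addr_eq0 h. Qed.

Lemma sub_eq_self (x t : G) : (x - t == x) = (t == 0).
Proof. by rewrite subr_eq -{1}(addr0 x) (inj_eq (addrI x)) eq_sym. Qed.
Lemma sub_eq_dbl (x t : G) : (x - t == x + x) = (t == - x).
Proof. by rewrite (inj_eq (addrI x)) eqr_oppLR. Qed.
Lemma dbl_sub_eq (x t : G) : (x + x - t == x) = (t == x).
Proof. by rewrite subr_eq (inj_eq (addrI x)) eq_sym. Qed.

Lemma Lneg a : g (- a) = - g a.
Proof.
have [->|a0] := eqVneq a 0; first by rewrite oppr0 g0 oppr0.
have [aa|aa0] := eqVneq (a + a) 0.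
  by rewrite opp_of_dbl // opp_of_dbl // L2g.
have N0 : (0 : G) \in ~: [set a; a + a].
  by rewrite !inE negb_or eq_sym a0 eq_sym aa0.
pose N : P0 G := exist (fun A : {set G} => 0 \in A) _ N0.
have F1 : P0add N (P0pair a) <> Gfull.
  move=> /(congr1 sval) /= /setP /(_ (a + a)).
  by rewrite addpairE in_setT addrK !inE !eqxx !orbT.
have F2 : forall t, t != 0 -> t != a -> t != - a -> P0add N (P0pair t) = Gfull.
  move=> t t0 ta tma; apply: P0_eq => /=; apply/setP => z.
  rewrite addpairE in_setT !inE.
  have [->|za] := eqVneq z a.
    by rewrite /= sub_eq_self sub_eq_dbl (negbTE t0) (negbTE tma).
  have [->|za2] := eqVneq z (a + a); last by [].
  by rewrite orbT /= dbl_sub_eq sub_eq_self (negbTE t0) (negbTE ta).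
have := fnG F1; rewrite fadd L0 => hne.
have [s hs] : exists s, s \notin sval (P0add (f N) (P0pair (g a))).
  case: (boolP [exists s, s \notin sval (P0add (f N) (P0pair (g a)))]).
    by move/existsP.
  move/existsPn => H; exfalso; apply: hne; apply: P0_eq; apply/setP => z.
  by rewrite in_setT; apply/negbNE.
move: hs; rewrite /= addpairE negb_or => /andP [hs1 hs2].
have [t et] := gsurj (- g a).
have [t0|t0] := eqVneq t 0.
  by move: (gnz a0); rewrite -oppr_eq0 -et t0 g0 eqxx.
have [ta|ta] := eqVneq t a.
  move: et; rewrite ta => /eqP; rewrite -addr_eq0 => /eqP /L2g' /eqP.
  by rewrite (negbTE aa0).
have [tma|tma] := eqVneq t (- a); first by rewrite -tma et.
move: (F2 t t0 ta tma) => /(congr1 f); rewrite fadd L0 fG et.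
move=> /(congr1 sval) /= /setP /(_ (s - g a)).
by rewrite in_setT addpairE opprK subrK (negbTE hs1) (negbTE hs2).
Qed.

Definition triv (A : P0 G) := forall t, closed A t -> t = 0.

Lemma triv_f A : triv A -> triv (f A).
Proof.
move=> h t ct; have [x ex] := gsurj t.
subst t; have := closed_eq ct; rewrite -L0 -fadd => /finj /eq_closed /h x0.
by rewrite x0 g0.
Qed.

Lemma triv_pair (c : G) : c + c != 0 -> triv (P0pair c).
Proof.
move=> cc t ct.
have := ct 0; rewrite /= add0r !inE eqxx => /(_ isT) /orP[/eqP //|/eqP tc].
have := ct c; rewrite /= tc !inE eqxx orbT => /(_ isT) /orP[/eqP e|/eqP e].
  by move: cc; rewrite e eqxx.
have c0 : c = 0 by apply: (addrI c); rewrite addr0.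
by move: cc; rewrite c0 addr0 eqxx.
Qed.

Lemma L2 A y : triv A -> y != 0 -> y \notin sval A -> exists C, P0add A C = M y.
Proof.
move=> tA y0 yA.
have C0 : (0 : G) \in [set z | y - z \notin sval A] by rewrite inE subr0.
exists (exist (fun B : {set G} => 0 \in B) _ C0); apply: P0_eq => /=; apply/setP => x.
rewrite /Mset inE; apply/imset2P/idP.
- case=> a' c ha hc ->; rewrite inE in hc; apply/orP; right.
  by apply/eqP => e; move: hc; rewrite -e addrK ha.
- move=> hx; have xy : x != y.
    move: hx => /orP [/eqP ->|//]; by rewrite eq_sym.
  case: (boolP [exists a', (a' \in sval A) && (y - (x - a') \notin sval A)]).
    move/existsP => [a' /andP [ha hn]]; exists a' (x - a') => //.
      by rewrite inE.
    by rewrite addrC subrK.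
  move/existsPn => H; exfalso.
  have cl : closed A (y - x).
    move=> z hz; move: (H z); rewrite hz /= => /negbNE.
    by rewrite opprB addrCA.
  by move: xy; rewrite eq_sym -subr_eq0 (tA _ cl) eqxx.
Qed.

Lemma M_plus y t : y != 0 -> t != 0 -> P0add (M y) (P0pair t) = Gfull.
Proof.
move=> y0 t0; apply: P0_eq => /=; apply/setP => z.
rewrite addpairE in_setT /Mset !inE.
have [->|zy] := eqVneq z y; last by rewrite orbT.
by rewrite sub_eq_self (negbTE t0) /= !orbT.
Qed.

Lemma LT A c : triv A -> c \in sval A -> c + c != 0 -> g c \in sval (f A).
Proof.
move=> tA cA cc; apply/negPn/negP => hn.
have c0 : c != 0 by apply: contra cc => /eqP ->; rewrite addr0.
have gc0 := gnz c0.
have [C eC] := L2 (triv_f tA) gc0 hn.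
have [C' eC'] := fsurj C.
pose X := P0add A C'.
have fX : f X = M (g c) by rewrite /X fadd eC'.
have cX : c \in sval X.
  apply/imset2P; exists c 0 => //; [exact: (svalP C') | by rewrite addr0].
have Xcov : forall t, t != 0 -> P0add X (P0pair t) = Gfull.
  by move=> t t0; apply: finj; rewrite fadd L0 fX fG M_plus // gnz.
have XnG : X <> Gfull.
  move=> e; move: fX; rewrite e fG => /(congr1 sval) /setP /(_ (g c)).
  by rewrite in_setT /= /Mset inE eqxx (negbTE gc0).
have [u hu] : exists u, u \notin sval X.
  case: (boolP [exists u, u \notin sval X]); first by move/existsP.
  move/existsPn => H; exfalso; apply: XnG; apply: P0_eq; apply/setP => z.
  by rewrite in_setT; apply/negbNE.
have X0 : (0 : G) \in sval X := svalP X.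
have u0 : u != 0 by apply: contraNneq hu => ->.
have uc : u != c by apply: contraNneq hu => ->.
have XM : X = M u.
  apply: P0_eq; apply/setP => z; rewrite /= /Mset inE.
  have [->|z0] := eqVneq z 0; first by rewrite X0.
  have [->|zu] := eqVneq z u; first by rewrite (negbTE hu).
  apply/negPn/negP => zn.
  have := Xcov (u - z); rewrite subr_eq0 eq_sym zu => /(_ isT).
  move=> /(congr1 sval) /setP /(_ u).
  by rewrite in_setT addpairE (negbTE hu) /= opprB addrCA subrr addr0 (negbTE zn).
have hu' : u \notin [set 0; c] by rewrite !inE negb_or u0.
have [D eD] := L2 (triv_pair cc) u0 hu'.
move: eD; rewrite -XM => /(congr1 f); rewrite fadd L0 fX => /(congr1 sval) /setP /(_ (g c)) E.
have : g c \in sval (P0add (P0pair (g c)) (f D)).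
  apply/imset2P; exists (g c) 0; rewrite ?addr0 ?inE ?eqxx ?orbT //; exact: (svalP (f D)).
by rewrite E /= /Mset inE eqxx (negbTE gc0).
Qed.

Definition closedb (A : P0 G) t := [forall z, (z \in sval A) ==> (z + t \in sval A)].
Lemma closedP A t : reflect (closed A t) (closedb A t).
Proof.
apply: (iffP forallP) => h z; first by move=> hz; exact: (implyP (h z) hz).
by apply/implyP; exact: h.
Qed.
Lemma closedD A x y : closed A x -> closed A y -> closed A (x + y).
Proof. by move=> hx hy z hz; rewrite addrA; apply: hy; apply: hx. Qed.

Lemma Ladd a b : g (a + b) = g a + g b.
Proof.
have [->|a0] := eqVneq a 0; first by rewrite g0 !add0r.
have [->|b0] := eqVneq b 0; first by rewrite g0 !addr0.
have [ab|ab0] := eqVneq (a + b) 0.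
  have eb : b = - a by apply/eqP; rewrite -addr_eq0 addrC ab.
  by rewrite ab g0 eb Lneg subrr.
have [aa|aa0] := eqVneq (a + a) 0; first exact: LPeq.
have [bb|bb0] := eqVneq (b + b) 0.
  have ba0 : b + a != 0 by rewrite addrC.
  by rewrite [a + b]addrC (LPeq bb b0 a0 ba0) addrC.
have [cc|cc0] := eqVneq ((a + b) + (a + b)) 0.
  have ma0 : - a != 0 by rewrite oppr_eq0.
  have e1 : a + b - a = b by rewrite addrAC subrr add0r.
  have ab0' : a + b + - a != 0 by rewrite e1.
  have := LPeq cc ab0 ma0 ab0'; rewrite e1 Lneg => ->.
  by rewrite addrCA subrr addr0.
pose S := P0add (P0pair a) (P0pair b).
have SE z : (z \in sval S) = [|| z == 0, z == a, z == b | z == a + b] by exact: pairsE.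
suff : g (a + b) \in sval (f S).
  rewrite /S fadd !L0 /= pairsE => /or4P [/eqP e|/eqP e|/eqP e|/eqP //].
  - by move: (gnz ab0); rewrite e eqxx.
  - move/ginj: e => e; have : a + b = a + 0 by rewrite addr0.
    by move/addrI => e'; move: b0; rewrite e' eqxx.
  - move/ginj: e => e; have : a + b = 0 + b by rewrite add0r.
    by move/addIr => e'; move: a0; rewrite e' eqxx.
have aS : a \in sval S by rewrite SE eqxx !orbT.
have bS : b \in sval S by rewrite SE eqxx !orbT.
have cS : a + b \in sval S by rewrite SE eqxx !orbT.
have [/closedP cl|ncl] := boolP (closedb S (a + b)).
  have := closed_eq cl; move/(congr1 f); rewrite fadd L0 => e.
  rewrite -e /= addpairE subrr; apply/orP; right; exact: (svalP (f S)).
have [/closedP cla|ncla] := boolP (closedb S a).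
  have := cla a aS; rewrite SE => /or4P [/eqP e|/eqP e|/eqP e|/eqP e].
  - by move: aa0; rewrite e eqxx.
  - have a0' : a = 0 by apply: (addrI a); rewrite addr0.
    by move: a0; rewrite a0' eqxx.
  - have clb : closed S b by rewrite -e; exact: closedD.
    by move: ncl => /closedP; case; exact: closedD.
  - by move: ncl => /closedP; case; rewrite -e; exact: closedD.
have [/closedP clb|nclb] := boolP (closedb S b).
  have := clb b bS; rewrite SE => /or4P [/eqP e|/eqP e|/eqP e|/eqP e].
  - by move: bb0; rewrite e eqxx.
  - by move: ncla => /closedP; case; rewrite -e; exact: closedD.
  - have b0' : b = 0 by apply: (addrI b); rewrite addr0.
    by move: b0; rewrite b0' eqxx.
  - move: ncl => /closedP; case; rewrite -e; exact: closedD.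
have tS : triv S.
  move=> t ct; have := ct 0 (svalP S); rewrite add0r SE.
  case/or4P => /eqP e //; move: ct; rewrite e => /closedP.
  - by rewrite (negbTE ncla).
  - by rewrite (negbTE nclb).
  - by rewrite (negbTE ncl).
exact: LT.
Qed.
End Main.

Unset Implicit Arguments.


Theorem proposition2p6 (G : finZmodType) (f : P0 G -> P0 G) (g : G -> G) :
  P0_automorphism f -> pullback f g -> group_automorphism g.
Proof.
move=> [fb [fa fu]] [g0 gp]; split.
  exact: (gbij fb fu g0 gp).
move=> x y; exact: (Ladd fb fa fu g0 gp).
Qed.
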